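(* Let $\mathcal Q$ be a quantaloid. A (possibly large) $\mathcal Q$-category $\mathcal E$ is total if and only if it is (quasi-)injective in $\mathcal Q$-$\mathbf{CAT}$ with respect to fully faithful $\mathcal Q$-functors: for all $\mathcal Q$-functors $F:\mathcal C\to\mathcal E$ and $G:\mathcal C\to\mathcal D$ with $G$ fully faithful, there exists a $\mathcal Q$-functor $H:\mathcal D\to\mathcal E$ with $H\circ G\cong F$.
   Context: A quantaloid is a category whose hom-sets are complete lattices with composition preserving joins in each variable; $v\le w\swarrow u\iff v\circ u\le w$. A $\mathcal Q$-category: class of objects with extents $|X|\in\mathrm{ob}\,\mathcal Q$ and arrows $\mathcal E(X,Y):|X|\to|Y|$ with $1_{|X|}\le\mathcal E(X,X)$, $\mathcal E(Y,Z)\circ\mathcal E(X,Y)\le\mathcal E(X,Z)$. A $\mathcal Q$-functor: $|FX|=|X|$, $\mathcal C(X,Y)\le\mathcal E(FX,FY)$; fully faithful if equality holds; $F\le G$ iff $1_{|X|}\le\mathcal E(FX,GX)$ for all $X$, and $F\cong G$ iff $F\le G\le F$. $\mathcal Q$-$\mathbf{CAT}$ is the (meta)category of $\mathcal Q$-categories and $\mathcal Q$-functors. Presheaves of extent $T$: $\varphi_X:|X|\to T$ with $\varphi_X\circ\mathcal E(X',X)\le\varphi_{X'}$, forming $\mathsf P\mathcal E$ with $\mathsf P\mathcal E(\varphi,\psi)=\bigwedge_X\psi_X\swarrow\varphi_X$; Yoneda $Z\mapsto\mathcal E(-,Z)$; $\mathcal E$ is total if Yoneda has a left adjoint, where $F\dashv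 G$ iff $\mathcal D(FX,Y)=\mathcal E(X,GY)$. *)

(* Defs.v *)
Set Implicit Arguments.
Unset Strict Implicit.

Record Quantaloid := {
  qob : Type;
  qhom : qob -> qob -> Type;
  qle : forall a b : qob, qhom a b -> qhom a b -> Prop;
  qle_refl : forall a b (f : qhom a b), qle f f;
  qle_trans : forall a b (f g h : qhom a b), qle f g -> qle g h -> qle f h;
  qle_antisym : forall a b (f g : qhom a b), qle f g -> qle g f -> f = g;
  qsup : forall a b : qob, (qhom a b -> Prop) -> qhom a b;
  qsup_ub : forall a b (S : qhom a b -> Prop) f, S f -> qle f (qsup S);
  qsup_least : forall a b (S : qhom a b -> Prop) g,
      (forall f, S f -> qle f g) -> qle (qsup S) g;
  qid : forall a : qob, qhom a a;
  qcomp : forall a b c : qob, qhom b c -> qhom a b -> qhom a c;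
  qcomp_assoc : forall a b c d (h : qhom c d) (g : qhom b c) (f : qhom a b),
      qcomp h (qcomp g f) = qcomp (qcomp h g) f;
  qcomp_id_l : forall a b (f : qhom a b), qcomp (qid b) f = f;
  qcomp_id_r : forall a b (f : qhom a b), qcomp f (qid a) = f;
  qcomp_sup_l : forall a b c (g : qhom b c) (S : qhom a b -> Prop),
      qcomp g (qsup S) = qsup (fun h => exists f, S f /\ h = qcomp g f);
  qcomp_sup_r : forall a b c (S : qhom b c -> Prop) (f : qhom a b),
      qcomp (qsup S) f = qsup (fun h => exists g, S g /\ h = qcomp g f)
}.

Arguments qhom : clear implicits.
Arguments qle {q a b} _ _.
Arguments qsup {q a b} _.
Arguments qid {q} a.
Arguments qcomp {q a b c} _ _.

Section QuantaloidFacts.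
Variable Q : Quantaloid.

Definition qinf {a b : qob Q} (S : qhom Q a b -> Prop) : qhom Q a b :=
  qsup (fun x => forall y, S y -> qle x y).

(* right implication:  v <= w ↙ u  iff  v ∘ u <= w  (w : a -> c, u : a -> b) *)
Definition qrimp {a b c : qob Q} (w : qhom Q a c) (u : qhom Q a b) : qhom Q b c :=
  qsup (fun v => qle (qcomp v u) w).

Lemma qinf_lb a b (S : qhom Q a b -> Prop) y : S y -> qle (qinf S) y.
Proof. intros Hy. apply qsup_least. intros x Hx. exact (Hx y Hy). Qed.

Lemma qinf_glb a b (S : qhom Q a b -> Prop) x :
  (forall y, S y -> qle x y) -> qle x (qinf S).
Proof. intros H. apply qsup_ub. exact H. Qed.

Lemma qcomp_mono_l a b c (h : qhom Q b c) (f g : qhom Q a b) :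
  qle f g -> qle (qcomp h f) (qcomp h g).
Proof.
  intros Hfg.
  assert (E : g = qsup (fun x => x = f \/ x = g)).
  { apply qle_antisym.
    - apply qsup_ub. now right.
    - apply qsup_least. intros x [->| ->]; [exact Hfg| apply qle_refl]. }
  rewrite E, qcomp_sup_l. apply qsup_ub. exists f. split; [now left| reflexivity].
Qed.

Lemma qcomp_mono_r a b c (f g : qhom Q b c) (h : qhom Q a b) :
  qle f g -> qle (qcomp f h) (qcomp g h).
Proof.
  intros Hfg.
  assert (E : g = qsup (fun x => x = f \/ x = g)).
  { apply qle_antisym.
    - apply qsup_ub. now right.
    - apply qsup_least. intros x [->| ->]; [exact Hfg| apply qle_refl]. }
  rewrite E, qcomp_sup_r. apply qsup_ub. exists f. split; [now left| reflexivity].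
Qed.

Lemma qrimp_intro a b c (w : qhom Q a c) (u : qhom Q a b) v :
  qle (qcomp v u) w -> qle v (qrimp w u).
Proof. intros H. apply qsup_ub. exact H. Qed.

Lemma qrimp_elim a b c (w : qhom Q a c) (u : qhom Q a b) v :
  qle v (qrimp w u) -> qle (qcomp v u) w.
Proof.
  intros H. eapply qle_trans. apply qcomp_mono_r, H.
  unfold qrimp. rewrite qcomp_sup_r. apply qsup_least.
  intros h [g [Hg ->]]. exact Hg.
Qed.

End QuantaloidFacts.

Arguments qinf {Q a b} _.
Arguments qrimp {Q a b c} _ _.

(* The (possibly large) class of objects is presented as a family
   [cob a] of objects of extent [a], for each object [a] of Q;
   so an object X of extent |X| = a is an inhabitant of [cob a]. *)
Record QCat (Q : Quantaloid) := {
  cob : qob Q -> Type;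
  chom : forall a b, cob a -> cob b -> qhom Q a b;
  chom_id : forall a (X : cob a), qle (qid a) (chom X X);
  chom_comp : forall a b c (X : cob a) (Y : cob b) (Z : cob c),
      qle (qcomp (chom Y Z) (chom X Y)) (chom X Z)
}.
Arguments cob {Q} _ _.
Arguments chom {Q} _ {a b} _ _.

Record QFunctor (Q : Quantaloid) (C D : QCat Q) := {
  fobj : forall a, cob C a -> cob D a;
  fmono : forall a b (X : cob C a) (Y : cob C b),
      qle (chom C X Y) (chom D (fobj X) (fobj Y))
}.
Arguments fobj {Q C D} _ {a} _.

Definition fully_faithful (Q : Quantaloid) (C D : QCat Q) (F : QFunctor C D) : Prop :=
  forall a b (X : cob C a) (Y : cob C b), chom C X Y = chom D (fobj F X) (fobj F Y).

Definition qfun_le (Q : Quantaloid) (C D : QCat Q) (F G : QFunctor C D) : Prop :=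
  forall a (X : cob C a), qle (qid a) (chom D (fobj F X) (fobj G X)).

Definition qfun_iso (Q : Quantaloid) (C D : QCat Q) (F G : QFunctor C D) : Prop :=
  qfun_le F G /\ qfun_le G F.

Definition qfun_comp (Q : Quantaloid) (C D E : QCat Q)
  (G : QFunctor D E) (F : QFunctor C D) : QFunctor C E.
Proof.
  refine {| fobj := fun a X => fobj G (fobj F X) |}.
  intros a b X Y. eapply qle_trans. apply (fmono F). apply (fmono G).
Defined.

Definition qadjoint (Q : Quantaloid) (E D : QCat Q)
  (F : QFunctor E D) (G : QFunctor D E) : Prop :=
  forall a b (X : cob E a) (Y : cob D b), chom D (fobj F X) Y = chom E X (fobj G Y).

Section Presheaves.
Variables (Q : Quantaloid) (E : QCat Q).

Definition presheaf (T : qob Q) : Type :=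
  { phi : forall a, cob E a -> qhom Q a T |
    forall a a' (X : cob E a) (X' : cob E a'),
      qle (qcomp (phi a X) (chom E X' X)) (phi a' X') }.

Definition psh_hom T T' (phi : presheaf T) (psi : presheaf T') : qhom Q T T' :=
  qinf (fun v => exists a (X : cob E a),
          v = qrimp (proj1_sig psi a X) (proj1_sig phi a X)).

Lemma psh_hom_id T (phi : presheaf T) : qle (qid T) (psh_hom phi phi).
Proof.
  apply qinf_glb. intros y [a [X ->]]. apply qrimp_intro.
  rewrite qcomp_id_l. apply qle_refl.
Qed.

Lemma psh_hom_comp T1 T2 T3 (phi : presheaf T1) (psi : presheaf T2) (chi : presheaf T3) :
  qle (qcomp (psh_hom psi chi) (psh_hom phi psi)) (psh_hom phi chi).
Proof.
  apply qinf_glb. intros y [a [X ->]]. apply qrimp_intro.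
  rewrite <- qcomp_assoc.
  eapply qle_trans. apply qcomp_mono_l. apply qrimp_elim.
  apply qinf_lb. exists a, X. reflexivity.
  apply qrimp_elim. apply qinf_lb. exists a, X. reflexivity.
Qed.

Definition PCat : QCat Q :=
  {| cob := presheaf; chom := psh_hom; chom_id := psh_hom_id; chom_comp := psh_hom_comp |}.

Definition yoneda_obj c (Z : cob E c) : presheaf c.
Proof.
  exists (fun a X => chom E X Z).
  intros a a' X X'. apply chom_comp.
Defined.

Definition yoneda : QFunctor E PCat.
Proof.
  refine (@Build_QFunctor Q E PCat (yoneda_obj : forall a, cob E a -> cob PCat a) _).
  intros b c Y Z. simpl. apply qinf_glb. intros v [a [X ->]]. simpl.
  apply qrimp_intro. apply chom_comp.
Defined.

End Presheaves.

Definition total (Q : Quantaloid) (E : QCat Q) : Prop :=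
  exists L : QFunctor (PCat E) E, qadjoint L (yoneda E).

(* Main.v *)
Require Import Defs.

Section Aux.
Variable Q : Quantaloid.

Lemma id_le_comp a (f g : qhom Q a a) :
  qle (qid a) f -> qle (qid a) g -> qle (qid a) (qcomp f g).
Proof.
  intros Hf Hg. eapply qle_trans; [| apply qcomp_mono_r, Hf].
  rewrite qcomp_id_l. exact Hg.
Qed.

Lemma yoneda_lemma (E : QCat Q) T (phi : presheaf E T) a (X : cob E a) :
  psh_hom (yoneda_obj X) phi = proj1_sig phi a X.
Proof.
  apply qle_antisym.
  - eapply qle_trans.
    + apply (qinf_lb (y := qrimp (proj1_sig phi a X) (chom E X X))).
      exists a, X. reflexivity.
    + rewrite <- (qcomp_id_r (qrimp (proj1_sig phi a X) (chom E X X))).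
      eapply qle_trans; [apply qcomp_mono_l, chom_id|].
      apply qrimp_elim. apply qle_refl.
  - apply qinf_glb. intros y [b [Z ->]]. apply qrimp_intro. simpl.
    apply (proj2_sig phi).
Qed.

Lemma yoneda_ff (E : QCat Q) : fully_faithful (yoneda E).
Proof.
  intros a b X Y. symmetry. exact (yoneda_lemma E _ (yoneda_obj Y) _ X).
Qed.

Definition idF (E : QCat Q) : QFunctor E E.
Proof.
  refine {| fobj := fun a X => X |}. intros. apply qle_refl.
Defined.

End Aux.

Theorem theorem10p1 (Q : Quantaloid) (E : QCat Q) :
  total E <->
  (forall (C D : QCat Q) (F : QFunctor C E) (G : QFunctor C D),
      fully_faithful G ->
      exists H : QFunctor D E, qfun_iso (qfun_comp H G) F).
Proof.
  split.
  - intros [L HL] C D F G Gff.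
    set (Kfun := fun T (d : cob D T) a (X : cob E a) =>
      qsup (fun h => exists b (Z : cob C b),
         h = qcomp (chom D (fobj G Z) d) (chom E X (fobj F Z)))).
    assert (Kpr : forall T (d : cob D T) a a' (X : cob E a) (X' : cob E a'),
      qle (qcomp (Kfun T d a X) (chom E X' X)) (Kfun T d a' X')).
    { intros T d a a' X X'. unfold Kfun. rewrite qcomp_sup_r.
      apply qsup_least. intros h [g [[b [Z ->]] ->]].
      rewrite <- qcomp_assoc. eapply qle_trans; [apply qcomp_mono_l, chom_comp|].
      apply qsup_ub. exists b, Z. reflexivity. }
    set (Kobj := fun T (d : cob D T) => exist _ (Kfun T d) (Kpr T d) : presheaf E T).
    assert (Kmono : forall a b (d : cob D a) (d' : cob D b),
      qle (chom D d d') (chom (PCat E) (Kobj a d) (Kobj b d'))).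
    { intros a b d d'. simpl. apply qinf_glb. intros y [c [X ->]].
      apply qrimp_intro. simpl. unfold Kfun. rewrite qcomp_sup_l.
      apply qsup_least. intros h [g [[e [Z ->]] ->]].
      rewrite qcomp_assoc. eapply qle_trans; [apply qcomp_mono_r, chom_comp|].
      apply qsup_ub. exists e, Z. reflexivity. }
    set (K := @Build_QFunctor Q D (PCat E) Kobj Kmono).
    exists (qfun_comp L K). split; intros b W; simpl.
    + rewrite HL. simpl. apply qinf_glb. intros y [a [X ->]].
      apply qrimp_intro. rewrite qcomp_id_l. simpl. unfold Kfun.
      apply qsup_least. intros h [c [Z ->]]. rewrite <- Gff.
      eapply qle_trans; [apply qcomp_mono_r, (fmono F)| apply chom_comp].
    + rewrite (@yoneda_ff _ E _ _ (fobj F W) (fobj L (Kobj b (fobj G W)))).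
      simpl. eapply qle_trans; [| apply psh_hom_comp].
      apply id_le_comp.
      * pose proof (HL _ _ (Kobj b (fobj G W)) (fobj L (Kobj b (fobj G W)))) as HH. simpl in HH. rewrite <- HH. apply chom_id.
      * apply qinf_glb. intros y [a [X ->]].
        apply qrimp_intro. rewrite qcomp_id_l. simpl. unfold Kfun.
        eapply qle_trans; [| apply qsup_ub; exists b, W; reflexivity].
        eapply qle_trans; [| apply qcomp_mono_r, chom_id].
        rewrite qcomp_id_l. apply qle_refl.
  - intros Hinj.
    destruct (Hinj E (PCat E) (@idF Q E) (yoneda E) (@yoneda_ff Q E)) as [H [H1 H2]].
    exists H. intros T b phi Y.
    assert (A : qle (qid T) (psh_hom phi (yoneda_obj (fobj H phi)))).
    { apply qinf_glb. intros y [a [X ->]]. apply qrimp_intro.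
      rewrite qcomp_id_l. simpl.
      rewrite <- (yoneda_lemma _ _ _ phi _ X).
      eapply qle_trans; [| apply (@chom_comp _ E _ _ _ X (fobj H (yoneda_obj X)))].
      eapply qle_trans; [| apply qcomp_mono_l, (H2 a X)].
      rewrite qcomp_id_r. apply (fmono H (yoneda_obj X) phi). }
    apply qle_antisym.
    + eapply qle_trans; [apply (fmono (yoneda E))|]. simpl.
      eapply qle_trans; [| apply psh_hom_comp].
      eapply qle_trans; [| apply qcomp_mono_l, A].
      rewrite qcomp_id_r. apply qle_refl.
    + eapply qle_trans; [apply (fmono H)|]. simpl.
      eapply qle_trans; [| apply (@chom_comp _ E _ _ _ (fobj H phi) (fobj H (yoneda_obj Y)) Y)].
      eapply qle_trans; [| apply qcomp_mono_r, (H1 b Y)].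
      rewrite qcomp_id_l. apply qle_refl.
Qed.
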